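(* Let $a=\{a_1,\dots,a_m\}$ and $b=\{b_1,\dots,b_m\}$ be positive integers with $a_r\neq b_r$ for all $r$, and fix $n\ge 0$. There is a function $P_{n,a,b}:\mathbb{Z}_{\ge0}\to\mathbb{Q}$ and a number $N=N(n,a,b)$ such that for every $s\ge1$ and all positive integers $k_1,\dots,k_s$ with $k_1+1,\dots,k_s+1$ primes larger than $N$, the number of $n$-element independent sets of $G(a,b,k_1)+\cdots+G(a,b,k_s)$ equals $P_{n,a,b}(k_1+\cdots+k_s)$. Furthermore, if the ratios $a_1/b_1,\dots,a_m/b_m$ are multiplicatively independent, then $P_{n,a,b}$ can be chosen to depend only on $n$ and $m$ (i.e. the same function works for all such $a,b$ with the same $m$).
   Context: A set $\{c_1,\dots,c_m\}$ of positive rationals is multiplicatively independent if $c_1^{i_1}\cdots c_m^{i_m}=1$ with integers $i_1,\dots,i_m$ implies $i_1=\dots=i_m=0$. For positive integers $k$, $G(a,b,k)$ is the simple graph with vertex set $\{1,2,\dots,k\}$ in which distinct vertices $i,j$ are adjacent if and only if $a_ri\equiv b_rj\pmod{k+1}$ or $a_rj\equiv b_ri\pmod{k+1}$ for some $1\le r\le m$. $G_1+\cdots+G_s$ denotes the disjoint union of graphs. An independent set is a set of vertices no two of which are adjacent. *)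

(* Defs.v *)
From HB Require Import structures.
From mathcomp Require Import all_boot all_order all_algebra.
Set Implicit Arguments. Unset Strict Implicit. Unset Printing Implicit Defensive.
Import Order.TTheory GRing.Theory Num.Theory.

Definition Gadj (m : nat) (a b : 'I_m -> nat) (k i j : nat) : bool :=
  (i != j) &&
  [exists r : 'I_m, (a r * i == b r * j %[mod k.+1]) ||
                    (a r * j == b r * i %[mod k.+1])].

(* Vertices of the disjoint union G(a,b,k_1)+...+G(a,b,k_s), ks = [k_1;...;k_s]:
   a pair (t, v) with t < s and v : 'I_(k_t) representing vertex v+1 of G(a,b,k_t). *)
Definition union_vertex (ks : seq nat) : finType :=
  {t : 'I_(size ks) & 'I_(nth 0 ks t)}.

Definition union_adj (m : nat) (a b : 'I_m -> nat) (ks : seq nat)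
  (x y : union_vertex ks) : bool :=
  (val (tag x) == val (tag y)) &&
  Gadj a b (nth 0 ks (tag x)) (val (tagged x)).+1 (val (tagged y)).+1.

Definition independent (m : nat) (a b : 'I_m -> nat) (ks : seq nat)
  (S : {set union_vertex ks}) : bool :=
  [forall x in S, forall y in S, ~~ union_adj a b x y].

Definition num_indep (m : nat) (a b : 'I_m -> nat) (ks : seq nat) (n : nat) : nat :=
  #|[set S : {set union_vertex ks} | (#|S| == n) && independent a b S]|.

Definition mult_indep_ratios (m : nat) (a b : 'I_m -> nat) : Prop :=
  forall e : 'I_m -> int,
    (\prod_(r < m) ((a r)%:R / (b r)%:R : rat) ^ (e r))%R = 1%R ->
    forall r, e r = 0%R.

(* Main.v *)
Require Import Defs.
From HB Require Import structures.
From mathcomp Require Import all_boot all_order all_algebra.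
From mathcomp Require Import zify.
Set Implicit Arguments. Unset Strict Implicit. Unset Printing Implicit Defensive.
Import GRing.Theory Num.Theory.

Definition Mexp (m : nat) := {ffun 'I_m -> nat * nat}.
Definition cside (m n : nat) := ('I_n * Mexp m)%type.
Definition cstr (m n : nat) := (cside m n * cside m n)%type.

Definition ev (m : nat) (a b : 'I_m -> nat) (E : Mexp m) : nat :=
  \prod_(r < m) (a r ^ (E r).1 * b r ^ (E r).2).
Definition madd (m : nat) (E F : Mexp m) : Mexp m :=
  [ffun r => ((E r).1 + (F r).1, (E r).2 + (F r).2)].
Definition sgside (m n : nat) (c0 : cstr m n) (s : cside m n) : cside m n :=
  if s.1 == c0.2.1 then (c0.1.1, madd s.2 c0.1.2) else (s.1, madd s.2 c0.2.2).
Definition sgc (m n : nat) (c0 c : cstr m n) : cstr m n :=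
  (sgside c0 c.1, sgside c0 c.2).

Fixpoint Frec (m n : nat) (t : cstr m n -> bool) (K : rat) (f : nat)
  (L : seq (cstr m n)) {struct f} : rat :=
  match f, L with
  | 0, _ => (K ^+ n)%R
  | f'.+1, [::] => (K ^+ n)%R
  | f'.+1, c :: L' =>
    (Frec t K f' L' -
     (if c.1.1 == c.2.1 then (if t c then Frec t K f' L' else 0)
      else Frec t K f' (map (sgc c) L') / K))%R
  end.

Fixpoint bd (m n : nat) (a b : 'I_m -> nat) (f : nat) (L : seq (cstr m n)) {struct f} : nat :=
  match f, L with
  | 0, _ => 0
  | f'.+1, [::] => 0
  | f'.+1, c :: L' =>
    maxn (maxn (ev a b c.1.2) (ev a b c.2.2))
         (maxn (bd a b f' L') (bd a b f' (map (sgc c) L')))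
  end.

Definition tv (ks : seq nat) (y : union_vertex ks) : nat := val (tag y).
Definition Xv (ks : seq nat) (y : union_vertex ks) : nat := (val (tagged y)).+1.
Definition pm (ks : seq nat) (y : union_vertex ks) : nat := (nth 0 ks (tag y)).+1.

Definition sat (m n : nat) (a b : 'I_m -> nat) (ks : seq nat) (c : cstr m n)
  (x : {ffun 'I_n -> union_vertex ks}) : bool :=
  (tv (x c.1.1) == tv (x c.2.1)) &&
  (ev a b c.1.2 * Xv (x c.1.1) == ev a b c.2.2 * Xv (x c.2.1) %[mod pm (x c.1.1)]).

Definition Cnt (m n : nat) (a b : 'I_m -> nat) (ks : seq nat) (L : seq (cstr m n)) : nat :=
  \sum_(x : {ffun 'I_n -> union_vertex ks}) all (fun c => ~~ sat a b c x) L.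

Lemma pm_tv ks (y : union_vertex ks) : pm y = (nth 0 ks (tv y)).+1.
Proof. by []. Qed.

Lemma Xv_lt ks (y : union_vertex ks) : Xv y < pm y.
Proof. by rewrite /Xv /pm ltnS ltn_ord. Qed.

Lemma Xv_gt0 ks (y : union_vertex ks) : 0 < Xv y.
Proof. by []. Qed.

Lemma tv_Xv_inj ks (y1 y2 : union_vertex ks) : tv y1 = tv y2 -> Xv y1 = Xv y2 -> y1 = y2.
Proof.
case: y1 => t1 v1; case: y2 => t2 v2; rewrite /tv /Xv /= => /val_inj Ht.
subst t2 => [[/val_inj ->]]. by [].
Qed.

Lemma modinv (be p : nat) : 0 < be -> coprime be p -> exists u, be * u = 1 %[mod p].
Proof.
move=> be0 cop; case: (egcdnP p be0) => km kn Hdef _.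
exists km; rewrite mulnC Hdef (eqP cop) -modnDml modnMl //.
Qed.

Lemma mod_cancel (be p A B : nat) : 0 < be -> coprime be p ->
  (A * be == B * be %[mod p]) = (A == B %[mod p]).
Proof.
move=> be0 cop; apply/idP/idP; last by move/eqP=> H; apply/eqP; rewrite -modnMml H modnMml.
move=> /eqP H; case: (modinv be0 cop) => u Hu.
apply/eqP.
have: A * be * u = B * be * u %[mod p] by rewrite -modnMml H modnMml.
by rewrite -!mulnA -(modnMmr A) -(modnMmr B) Hu !modnMmr !muln1.
Qed.

Lemma cop_ndvd (p x : nat) : prime p -> coprime x p -> ~~ (p %| x).
Proof. by move=> pp; rewrite coprime_sym prime_coprime. Qed.

Lemma sol_exists ks (w : union_vertex ks) (al be : nat) :
  prime (pm w) -> 0 < be -> coprime al (pm w) -> coprime be (pm w) ->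
  exists y : union_vertex ks, (tv y == tv w) && (al * Xv w == be * Xv y %[mod pm w]).
Proof.
move=> pp be0 cal cbe.
have p1 : 1 < pm w by apply: prime_gt1.
case: (modinv be0 cbe) => u Hu.
have u0 : 0 < u.
  case: u Hu => // ; rewrite muln0 mod0n modn_small //.
have cu : coprime u (pm w).
  apply: modn_coprime => //; exists be; rewrite mulnC Hu modn_small //.
have cX : coprime (Xv w) (pm w).
  rewrite coprime_sym prime_coprime //; by rewrite gtnNdvd // Xv_lt.
set r := (al * Xv w * u) %% pm w.
have r0 : 0 < r.
  rewrite lt0n; apply/negP => /eqP H.
  have : pm w %| al * Xv w * u by rewrite /dvdn -/r H.
  by apply/negP/cop_ndvd => //; rewrite !coprimeMl cal cX cu.
have rlt : r.-1 < nth 0 ks (tag w).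
  by rewrite -ltnS prednK // ltn_pmod // ltnW.
exists (existT (fun t : 'I_(size ks) => 'I_(nth 0 ks t)) (tag w) (Ordinal rlt)).
rewrite /tv eqxx /=; apply/eqP.
rewrite /Xv /= prednK // /r modnMmr. idtac.
by rewrite [be * _]mulnC -mulnA [u * be]mulnC -(modnMmr (al * Xv w)) Hu modnMmr muln1.
Qed.

Definition relv ks (al be : nat) (w y : union_vertex ks) : bool :=
  (tv w == tv y) && (al * Xv w == be * Xv y %[mod pm w]).

Definition gsol ks al be (w : union_vertex ks) : union_vertex ks :=
  odflt w [pick y | relv al be w y].

Lemma gsol_spec ks al be (w : union_vertex ks) :
  prime (pm w) -> 0 < be -> coprime al (pm w) -> coprime be (pm w) ->
  relv al be w (gsol al be w).
Proof.
move=> pp be0 cal cbe; rewrite /gsol; case: pickP => [y -> // | H].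
case: (sol_exists pp be0 cal cbe) => y Hy.
by move: (H y); rewrite /relv eq_sym Hy.
Qed.

Lemma sol_uniq ks al be (w y1 y2 : union_vertex ks) :
  0 < be -> coprime be (pm w) ->
  relv al be w y1 -> relv al be w y2 -> y1 = y2.
Proof.
move=> be0 cbe /andP [/eqP t1 /eqP e1] /andP [/eqP t2 /eqP e2].
have hp1 : pm y1 = pm w by rewrite !pm_tv t1.
have hp2 : pm y2 = pm w by rewrite !pm_tv t2.
apply: tv_Xv_inj; first by rewrite -t1 -t2.
have : Xv y1 * be == Xv y2 * be %[mod pm w] by rewrite mulnC [Xv y2 * _]mulnC -e1 -e2.
rewrite mod_cancel // => /eqP.
by rewrite !modn_small // -?hp1 -?hp2 ?Xv_lt // hp1 -hp2 Xv_lt.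
Qed.

Lemma count_fiber ks n (u u' : 'I_n) al be
  (Q : {ffun 'I_n -> union_vertex ks} -> bool) :
  u != u' -> (forall y : union_vertex ks, prime (pm y)) -> 0 < be ->
  (forall y : union_vertex ks, coprime al (pm y)) ->
  (forall y : union_vertex ks, coprime be (pm y)) ->
  (forall x x' : {ffun 'I_n -> union_vertex ks}, (forall i, i != u' -> x i = x' i) -> Q x = Q x') ->
  \sum_(x : {ffun 'I_n -> union_vertex ks}) Q x =
  #|union_vertex ks| * \sum_(x : {ffun 'I_n -> union_vertex ks})
                           (relv al be (x u) (x u') && Q x).
Proof.
move=> uu' pp be0 cal cbe Hinv.
pose fx (x : {ffun 'I_n -> union_vertex ks}) : {ffun 'I_n -> union_vertex ks} :=
  [ffun i => if i == u' then gsol al be (x u) else x i].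
have Hfx : forall x, relv al be (fx x u) (fx x u').
  move=> x; rewrite !ffunE eqxx (negbTE uu'); exact: gsol_spec.
have Hfix : forall z : {ffun 'I_n -> union_vertex ks}, relv al be (z u) (z u') -> fx z = z.
  move=> z Hz; apply/ffunP => i; rewrite ffunE; case: eqP => // ->.
  exact: (sol_uniq be0 (cbe _) (gsol_spec (pp _) be0 (cal _) (cbe _)) Hz).
have HQ : forall x, Q x = Q (fx x).
  by move=> x; apply: Hinv => i /negbTE ni; rewrite ffunE ni.
rewrite (eq_bigr (fun x => nat_of_bool (Q (fx x)))); last by move=> x _; rewrite -HQ.
rewrite (partition_big fx predT) //=.
rewrite big_distrr /=; apply: eq_bigr => z _.
rewrite (eq_bigr (fun=> nat_of_bool (Q z))); last by move=> x /eqP ->.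
rewrite sum_nat_cond_const.
case Hr: (relv al be (z u) (z u')); last first.
  rewrite (_ : #|_| = 0) ?muln0 //; apply: eq_card0 => x; rewrite inE.
  by apply/negP => /eqP Hx; move: (Hfx x); rewrite Hx Hr.
rewrite /= mulnC [RHS]mulnC; congr (_ * _).
pose upd (y : union_vertex ks) : {ffun 'I_n -> union_vertex ks} :=
  [ffun i => if i == u' then y else z i].
have inj_upd : injective upd.
  by move=> y1 y2 /ffunP /(_ u'); rewrite !ffunE eqxx.
rewrite (_ : #|[set x | fx x == z]| = #|[seq upd y | y in predT]|).
  by rewrite card_image.
apply: eq_card => x.
rewrite inE; apply/eqP/imageP.
  move=> Hx; exists (x u') => //; apply/ffunP => i; rewrite /upd -Hx !ffunE.
  by case: eqP => // ->.
move=> [y _ ->]; rewrite -[in RHS](Hfix z Hr). apply/ffunP => i; rewrite /upd !ffunE.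
by rewrite (negbTE uu'); case: (i == u').
Qed.

Lemma ev_madd m (a b : 'I_m -> nat) E F : ev a b (madd E F) = ev a b E * ev a b F.
Proof.
rewrite /ev -big_split; apply: eq_bigr => r _; rewrite ffunE /= !expnD.
by rewrite mulnACA.
Qed.

Lemma ev_gt0 m (a b : 'I_m -> nat) E :
  (forall r, 0 < a r) -> (forall r, 0 < b r) -> 0 < ev a b E.
Proof.
move=> a0 b0; rewrite /ev; apply: prodn_gt0 => r.
by rewrite muln_gt0 !expn_gt0 a0 b0.
Qed.

Lemma cop_small (x p : nat) : prime p -> 0 < x -> x < p -> coprime x p.
Proof. by move=> pp x0 xp; rewrite coprime_sym prime_coprime // gtnNdvd. Qed.

Lemma sig_side_sem m n (a b : 'I_m -> nat) ks (c0 : cstr m n)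
  (x : {ffun 'I_n -> union_vertex ks}) (s : cside m n) :
  sat a b c0 x ->
  tv (x (sgside c0 s).1) = tv (x s.1) /\
  ev a b (sgside c0 s).2 * Xv (x (sgside c0 s).1) =
  ev a b c0.2.2 * (ev a b s.2 * Xv (x s.1)) %[mod pm (x s.1)].
Proof.
move=> /andP [/eqP Ht /eqP He]; rewrite /sgside.
case: eqP => [Hs | _] /=; last first.
  by split => //; rewrite ev_madd [ev a b s.2 * _]mulnC -mulnA.
rewrite Hs; split => //.
have hp : pm (x c0.2.1) = pm (x c0.1.1) by rewrite !pm_tv Ht.
rewrite hp ev_madd -mulnA -modnMmr He modnMmr.
by rewrite mulnA [ev a b s.2 * _]mulnC mulnA.
Qed.

Lemma sat_sgc m n (a b : 'I_m -> nat) ks (c0 c : cstr m n)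
  (x : {ffun 'I_n -> union_vertex ks}) :
  0 < ev a b c0.2.2 -> (forall y : union_vertex ks, coprime (ev a b c0.2.2) (pm y)) ->
  sat a b c0 x -> sat a b (sgc c0 c) x = sat a b c x.
Proof.
move=> be0 cbe H0.
case: (sig_side_sem c.1 H0) => t1 e1.
case: (sig_side_sem c.2 H0) => t2 e2.
rewrite /sat /sgc /= t1 t2.
have hp1 : pm (x (sgside c0 c.1).1) = pm (x c.1.1) by rewrite !pm_tv t1.
rewrite hp1.
case: eqP => //= Ht.
have hp2 : pm (x c.2.1) = pm (x c.1.1) by rewrite !pm_tv Ht.
rewrite -modn_mod e1 -hp2 -[X in _ == X]modn_mod e2 hp2 !modn_mod.
by rewrite [ev a b c0.2.2 * _]mulnC [ev a b c0.2.2 * (_ * _)]mulnC mod_cancel.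
Qed.

Definition tab m n (a b : 'I_m -> nat) (c : cstr m n) : bool := ev a b c.1.2 == ev a b c.2.2.

Lemma Cnt_nil m n (a b : 'I_m -> nat) ks :
  Cnt a b ks ([::] : seq (cstr m n)) = #|union_vertex ks| ^ n.
Proof.
rewrite /Cnt /=.
by rewrite sum1_card card_ffun card_ord.
Qed.

Lemma Cnt_split m n (a b : 'I_m -> nat) ks (c : cstr m n) L :
  Cnt a b ks L = Cnt a b ks (c :: L) +
    \sum_(x : {ffun 'I_n -> union_vertex ks}) (sat a b c x && all (fun c => ~~ sat a b c x) L).
Proof.
rewrite /Cnt -big_split; apply: eq_bigr => x _ /=.
by case: (sat a b c x); case: (all _ L).
Qed.

Lemma sgside_idx m n (c0 : cstr m n) s : c0.1.1 != c0.2.1 -> (sgside c0 s).1 != c0.2.1.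
Proof. by move=> H; rewrite /sgside; case: (s.1 =P c0.2.1) => [_ | /eqP]. Qed.

Lemma sat_local m n (a b : 'I_m -> nat) ks (c : cstr m n) (x x' : {ffun 'I_n -> union_vertex ks}) :
  x c.1.1 = x' c.1.1 -> x c.2.1 = x' c.2.1 -> sat a b c x = sat a b c x'.
Proof. by rewrite /sat => -> ->. Qed.

Lemma main_rec m n (a b : 'I_m -> nat) ks f (L : seq (cstr m n)) :
  (forall r, 0 < a r) -> (forall r, 0 < b r) -> 0 < #|union_vertex ks| ->
  size L <= f ->
  (forall y : union_vertex ks, prime (pm y) && (bd a b f L < pm y)) ->
  ((Cnt a b ks L)%:R = Frec (@tab m n a b) (#|union_vertex ks|%:R) f L :> rat)%R.
Proof.
move=> a0 b0 K0; elim: f L => [|f IH] [|c L] //=.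
- by move=> _ _; rewrite Cnt_nil natrX.
- by move=> _ _; rewrite Cnt_nil natrX.
move=> szL Hy.
have pp : forall y : union_vertex ks, prime (pm y) by move=> y; case/andP: (Hy y).
have Hb : forall y : union_vertex ks,
   [/\ ev a b c.1.2 < pm y, ev a b c.2.2 < pm y, bd a b f L < pm y &
       bd a b f (map (sgc c) L) < pm y].
  move=> y; case/andP: (Hy y) => _.
  by rewrite !gtn_max => /andP [/andP [-> ->] /andP [-> ->]].
have IHL : ((Cnt a b ks L)%:R = Frec (@tab m n a b) (#|union_vertex ks|%:R) f L :> rat)%R.
  by apply: IH => // y; rewrite pp; case: (Hb y).
have HS : ((Cnt a b ks (c :: L))%:R = (Cnt a b ks L)%:R -
   (\sum_(x : {ffun 'I_n -> union_vertex ks})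
      (sat a b c x && all (fun c => ~~ sat a b c x) L))%:R :> rat)%R.
  by rewrite (Cnt_split a b ks c L) natrD addrK.
rewrite HS IHL; congr (_ - _)%R.
case: eqP => [Hs | Hs].
-
  rewrite (eq_bigr (fun x => nat_of_bool (tab a b c && all (fun c => ~~ sat a b c x) L))).
    case: (tab a b c); first by rewrite -IHL /Cnt.
    by rewrite big1.
  move=> x _; congr (nat_of_bool (_ && _)).
  rewrite /sat /tab Hs eqxx /=.
  set y := x c.2.1.
  case: (Hb y) => h1 h2 _ _.
  rewrite mod_cancel ?Xv_gt0 //; last by apply: cop_small => //; exact: Xv_lt.
  by rewrite !modn_small.
-
  have be0 : 0 < ev a b c.2.2 by apply: ev_gt0.
  have al0 : 0 < ev a b c.1.2 by apply: ev_gt0.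
  have cbe : forall y : union_vertex ks, coprime (ev a b c.2.2) (pm y).
    by move=> y; case: (Hb y) => _ h _ _; apply: cop_small.
  have cal : forall y : union_vertex ks, coprime (ev a b c.1.2) (pm y).
    by move=> y; case: (Hb y) => h _ _ _; apply: cop_small.
  have IHs : ((Cnt a b ks (map (sgc c) L))%:R =
      Frec (@tab m n a b) (#|union_vertex ks|%:R) f (map (sgc c) L) :> rat)%R.
    by apply: IH; rewrite ?size_map // => y; rewrite pp; case: (Hb y).
  rewrite -IHs.
  have HP : \sum_(x : {ffun 'I_n -> union_vertex ks})
              (sat a b c x && all (fun c => ~~ sat a b c x) L) =
            \sum_(x : {ffun 'I_n -> union_vertex ks})
              (relv (ev a b c.1.2) (ev a b c.2.2) (x c.1.1) (x c.2.1) &&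
               all (fun c' => ~~ sat a b c' x) (map (sgc c) L)).
    apply: eq_bigr => x _.
    have -> : relv (ev a b c.1.2) (ev a b c.2.2) (x c.1.1) (x c.2.1) = sat a b c x by [].
    case Hc: (sat a b c x) => //=.
    apply: congr1; elim: (L) => //= c' L' IHl.
    by rewrite sat_sgc // IHl.
  rewrite HP.
  have Hcf := count_fiber (u := c.1.1) (u' := c.2.1)
      (al := ev a b c.1.2) (be := ev a b c.2.2)
      (Q := fun x => all (fun c' => ~~ sat a b c' x) (map (sgc c) L)).
  rewrite /Cnt Hcf //; first last.
    move=> x x' Hxx /=; elim: (L) => //= c' L' ->; congr (~~ _ && _).
    have Hs' : c.1.1 != c.2.1 by apply/eqP.
    by apply: sat_local; apply: Hxx; apply: sgside_idx.
    by apply/eqP.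
  rewrite natrM mulrC mulKf //.
  by rewrite pnatr_eq0 -lt0n.
Qed.

Lemma factor_id (A B : rat) (x y x' y' : nat) : A != 0%R -> B != 0%R -> x + y = x' + y' ->
  ((A / B) ^ (x%:Z - x'%:Z) * (A ^+ x' * B ^+ y') = A ^+ x * B ^+ y)%R.
Proof.
move=> A0 B0 H.
rewrite expfzMl exprz_inv.
have -> : (A ^+ x' = A ^ (x'%:Z))%R by [].
have -> : (B ^+ y' = B ^ (y'%:Z))%R by [].
have -> : (A ^+ x = A ^ (x%:Z))%R by [].
have -> : (B ^+ y = B ^ (y%:Z))%R by [].
rewrite mulrACA -!expfzDr //.
congr (_ ^ _ * _ ^ _)%R; lia.
Qed.

Definition bal m n (c : cstr m n) : bool :=
  [forall r, ((c.1.2 r).1 + (c.1.2 r).2 == (c.2.2 r).1 + (c.2.2 r).2)].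

Lemma bal_sgc m n (c0 c : cstr m n) : bal c0 -> bal c -> bal (sgc c0 c).
Proof.
move=> /forallP H0 /forallP H; apply/forallP => r.
move: (H0 r) (H r); rewrite /sgc /sgside /=.
case: (c.1.1 == c0.2.1); case: (c.2.1 == c0.2.1); rewrite /= !ffunE /= => /eqP h0 /eqP h; apply/eqP; lia.
Qed.

Lemma Frec_ext m n (t1 t2 : cstr m n -> bool) K f L :
  all (@bal m n) L -> (forall c, bal c -> t1 c = t2 c) -> Frec t1 K f L = Frec t2 K f L.
Proof.
move=> HL Ht; elim: f L HL => [|f IH] [|c L] //= /andP [Hc HL].
rewrite Ht // !IH //.
by rewrite all_map; apply/allP => c' Hc'; apply: bal_sgc => //; move/allP: HL; apply.
Qed.

Lemma tab_indep m n (a b : 'I_m -> nat) (c : cstr m n) :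
  (forall r, 0 < a r) -> (forall r, 0 < b r) -> mult_indep_ratios a b -> bal c ->
  tab a b c = (c.1.2 == c.2.2).
Proof.
move=> a0 b0 Hind /forallP Hb; rewrite /tab; apply/eqP/eqP => [He | ->] //.
pose e (r : 'I_m) : int := ((c.1.2 r).1%:Z - (c.2.2 r).1%:Z)%R.
have evF0 : ((ev a b c.2.2)%:R != 0 :> rat)%R by rewrite pnatr_eq0 -lt0n ev_gt0.
have key : (\prod_(r < m) ((a r)%:R / (b r)%:R : rat) ^ (e r))%R = 1%R.
  have H1 : (\prod_(r < m) ((a r)%:R / (b r)%:R : rat) ^ (e r) * (ev a b c.2.2)%:R
             = (ev a b c.1.2)%:R)%R.
    rewrite /ev !natr_prod -big_split /=; apply: eq_bigr => r _.
    rewrite !natrM !natrX; apply: factor_id.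
    - by rewrite pnatr_eq0 -lt0n a0.
    - by rewrite pnatr_eq0 -lt0n b0.
    - by apply/eqP; rewrite (eqP (Hb r)).
  by move: H1; rewrite He => /(congr1 (fun z => z / (ev a b c.2.2)%:R)%R); rewrite mulfK // divff.
have He0 := Hind e key.
apply/ffunP => r; move: (He0 r) (Hb r); rewrite /e => /eqP; rewrite subr_eq0 => /eqP [h1].
case: (c.1.2 r) h1 => x y; case: (c.2.2 r) => x' y' /= -> /eqP h.
by congr (_, _); lia.
Qed.

Definition e0 m : Mexp m := [ffun _ => (0, 0)].
Definition ea m (r : 'I_m) : Mexp m := [ffun r' => if r' == r then (1, 0) else (0, 0)].
Definition eb m (r : 'I_m) : Mexp m := [ffun r' => if r' == r then (0, 1) else (0, 0)].
Definition pairs n : seq ('I_n * 'I_n) :=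
  [seq ij <- [seq (i, j) | i <- enum 'I_n, j <- enum 'I_n] | ij.1 != ij.2].
Definition Linit m n : seq (cstr m n) :=
  [seq ((ij.1, e0 m), (ij.2, e0 m)) | ij <- pairs n] ++
  flatten [seq [seq ((ij.1, ea r), (ij.2, eb r)) | r <- enum 'I_m] | ij <- pairs n].

Lemma ev_e0 m (a b : 'I_m -> nat) : ev a b (e0 m) = 1.
Proof. by rewrite /ev big1 // => r _; rewrite ffunE. Qed.

Lemma ev_ea m (a b : 'I_m -> nat) r : ev a b (ea r) = a r.
Proof.
rewrite /ev (bigD1 r) //= big1 ?muln1; first by rewrite ffunE eqxx /= muln1.
by move=> r' /negbTE ne; rewrite ffunE ne.
Qed.

Lemma ev_eb m (a b : 'I_m -> nat) r : ev a b (eb r) = b r.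
Proof.
rewrite /ev (bigD1 r) //= big1 ?muln1; first by rewrite ffunE eqxx /= mul1n.
by move=> r' /negbTE ne; rewrite ffunE ne.
Qed.

Lemma mem_pairs n (i j : 'I_n) : ((i, j) \in pairs n) = (i != j).
Proof.
rewrite /pairs mem_filter /=; case: (i != j) => //=.
by apply/allpairsP; exists (i, j); rewrite !mem_enum.
Qed.

Lemma all_Linit m n (P : cstr m n -> bool) :
  all P (Linit m n) =
  [forall i, forall j, (i != j) ==>
     (P ((i, e0 m), (j, e0 m)) && [forall r, P ((i, ea r), (j, eb r))])].
Proof.
apply/allP/forallP => [H i | H c].
  apply/forallP => j; apply/implyP => ij; apply/andP; split.
    apply: H; rewrite mem_cat; apply/orP; left; apply/mapP; exists (i, j) => //.
    by rewrite mem_pairs.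
  apply/forallP => r; apply: H; rewrite mem_cat; apply/orP; right.
  apply/flattenP; exists [seq ((i, ea r0), (j, eb r0)) | r0 <- enum 'I_m].
    by apply/mapP; exists (i, j) => //; rewrite mem_pairs.
  by apply/mapP; exists r => //; rewrite mem_enum.
rewrite mem_cat => /orP [/mapP [[i j] Hij ->] | /flattenP [s /mapP [[i j] Hij ->] /mapP [r _ ->]]];
  move: Hij; rewrite mem_pairs => ne; move/forallP: (H i) => /(_ j);
  rewrite ne /= => /andP [h1 /forallP h2] //.
Qed.

Definition good m n (a b : 'I_m -> nat) ks (x : {ffun 'I_n -> union_vertex ks}) : bool :=
  injectiveb x && [forall i, forall j, ~~ union_adj a b (x i) (x j)].

Lemma pm_eq ks (y1 y2 : union_vertex ks) : tv y1 = tv y2 -> pm y1 = pm y2.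
Proof. by rewrite !pm_tv => ->. Qed.

Lemma sat_e0 m n (a b : 'I_m -> nat) ks (x : {ffun 'I_n -> union_vertex ks}) i j :
  sat a b ((i, e0 m), (j, e0 m)) x = (x i == x j).
Proof.
rewrite /sat /= ev_e0 !mul1n; apply/idP/eqP => [/andP [/eqP t /eqP e] | ->].
  apply: tv_Xv_inj => //; move: e; rewrite !modn_small ?Xv_lt // (pm_eq t) Xv_lt //.
by rewrite !eqxx.
Qed.

Lemma adj_ne ks m (a b : 'I_m -> nat) (y : union_vertex ks) : ~~ union_adj a b y y.
Proof. by rewrite /union_adj /Gadj eqxx /= eqxx. Qed.

Lemma good_sat m n (a b : 'I_m -> nat) ks (x : {ffun 'I_n -> union_vertex ks}) :
  all (fun c => ~~ sat a b c x) (Linit m n) = good a b x.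
Proof.
rewrite all_Linit /good; apply/forallP/andP => [H | [/injectiveP Hinj /forallP H] i].
  have Hinj : injective x.
    move=> i j Hx; apply/eqP; apply: contraT => ne.
    by move: (forallP (H i) j); rewrite ne sat_e0 Hx eqxx.
  split; first by apply/injectiveP.
  apply/forallP => i; apply/forallP => j.
  case: (i =P j) => [-> | /eqP ne]; first exact: adj_ne.
  rewrite /union_adj /Gadj; apply/negP => /andP [/eqP t /andP [_ /existsP [r /orP [h | h]]]].
    move: (forallP (H i) j); rewrite ne /= => /andP [_ /forallP /(_ r)].
    by rewrite /sat /= ev_ea ev_eb; rewrite /tv t eqxx h.
  move: (forallP (H j) i); rewrite eq_sym ne /= => /andP [_ /forallP /(_ r)].
  rewrite /sat /= ev_ea ev_eb /tv t eqxx /=.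
  have hp : pm (x j) = pm (x i) by apply: pm_eq; rewrite /tv t.
  by rewrite hp h.
apply/forallP => j; apply/implyP => ne; apply/andP; split.
  by rewrite sat_e0; apply: contra ne => /eqP /Hinj ->.
apply/forallP => r; apply/negP; rewrite /sat /= ev_ea ev_eb => /andP [/eqP t h].
move: (forallP (H i) j); rewrite /union_adj /Gadj; apply/negP.
rewrite -/(tv _) t eqxx /= negbK; apply/andP; split.
  apply: contra ne => /eqP hX; apply/eqP; apply: Hinj; exact: tv_Xv_inj.
by apply/existsP; exists r; rewrite h.
Qed.

Lemma card_uv ks : #|union_vertex ks| = sumn ks.
Proof.
rewrite card_tagged.
rewrite (eq_map (fun i : 'I_(size ks) => card_ord (nth 0 ks i))).
by rewrite -[in RHS](mkseq_nth 0 ks) /mkseq -val_enum_ord -map_comp.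
Qed.

Lemma num_indep_fact m n (a b : 'I_m -> nat) ks :
  num_indep a b ks n * n`! =
  \sum_(x : {ffun 'I_n -> union_vertex ks}) good a b x.
Proof.
set GS := [set S : {set union_vertex ks} | (#|S| == n) && independent a b S].
pose img (x : {ffun 'I_n -> union_vertex ks}) := [set x i | i : 'I_n].
have card_img : forall x : {ffun 'I_n -> union_vertex ks}, injectiveb x -> #|img x| = n.
  by move=> x /injectiveP inj; rewrite card_imset // card_ord.
rewrite -big_mkcond /= (partition_big img (fun S => S \in GS)); last first.
  move=> x /andP [Hi /forallP Ha]; rewrite inE card_img // eqxx /=.
  apply/forallP => y; apply/implyP => /imsetP [i _ ->].
  apply/forallP => z; apply/implyP => /imsetP [j _ ->].
  by move/forallP: (Ha i).
rewrite /num_indep -/GS -sum_nat_const; apply: eq_bigr => S.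
rewrite inE => /andP [/eqP cS /forallP Hind].
rewrite sum_nat_cond_const muln1 -ffactnn.
have -> : n ^_ n = #|S| ^_ #|'I_n| by rewrite cS card_ord.
rewrite -card_inj_ffuns_on; apply/esym.
apply: eq_card => x; rewrite !inE.
apply/andP/andP => [[/andP [Hi _] /eqP Hx] | [/ffun_onP Hon Hi]].
  split => //; apply/ffun_onP => i; rewrite -Hx; exact: imset_f.
have HxS : img x = S.
  apply/eqP; rewrite eqEcard card_img // cS leqnn andbT.
  by apply/subsetP => y /imsetP [i _ ->].
split; last by rewrite HxS.
rewrite /good Hi /=; apply/forallP => i; apply/forallP => j.
have := Hind (x i); rewrite -HxS imset_f // => /forallP /(_ (x j)).
by rewrite imset_f.
Qed.

Lemma main_count m n (a b : 'I_m -> nat) ks :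
  (forall r, 0 < a r) -> (forall r, 0 < b r) ->
  0 < size ks -> all (fun k => 0 < k) ks ->
  all (fun k => prime k.+1 && (bd a b (size (Linit m n)) (Linit m n) < k.+1)) ks ->
  ((num_indep a b ks n)%:R =
   Frec (tab a b) (sumn ks)%:R (size (Linit m n)) (Linit m n) / n`!%:R :> rat)%R.
Proof.
move=> a0 b0 szk kpos Hks.
have HC : Cnt a b ks (Linit m n) = \sum_(x : {ffun 'I_n -> union_vertex ks}) good a b x.
  by rewrite /Cnt; apply: eq_bigr => x _; rewrite good_sat.
have K0 : 0 < #|union_vertex ks|.
  rewrite card_uv; case: ks szk kpos {Hks HC} => //= k ks _ /andP [k0 _].
  by rewrite addn_gt0 k0.
have Hy : forall y : union_vertex ks,
    prime (pm y) && (bd a b (size (Linit m n)) (Linit m n) < pm y).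
  move=> y; rewrite /pm; move/allP: Hks; apply; apply: mem_nth; exact: ltn_ord.
have := main_rec a0 b0 K0 (leqnn _) Hy; rewrite card_uv => <-.
rewrite HC -num_indep_fact natrM mulfK //.
by rewrite pnatr_eq0 -lt0n fact_gt0.
Qed.

Lemma all_bal_Linit m n : all (@bal m n) (Linit m n).
Proof.
rewrite all_Linit; apply/forallP => i; apply/forallP => j; apply/implyP => _.
apply/andP; split; first by apply/forallP => r; rewrite /bal /= !ffunE.
apply/forallP => r; apply/forallP => r'; rewrite /= !ffunE.
by case: (r' == r).
Qed.

Theorem corollary3p2 (m n : nat) :
  (forall a b : 'I_m -> nat,
     (forall r, 0 < a r) -> (forall r, 0 < b r) -> (forall r, a r != b r) ->
     exists (P : nat -> rat) (N : nat),
       forall ks : seq nat,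
         0 < size ks -> all (fun k => 0 < k) ks ->
         all (fun k => prime k.+1 && (N < k.+1)) ks ->
         ((num_indep a b ks n)%:R = P (sumn ks))%R)
  /\
  (exists P : nat -> rat,
     forall a b : 'I_m -> nat,
       (forall r, 0 < a r) -> (forall r, 0 < b r) -> (forall r, a r != b r) ->
       mult_indep_ratios a b ->
       exists N : nat,
         forall ks : seq nat,
           0 < size ks -> all (fun k => 0 < k) ks ->
           all (fun k => prime k.+1 && (N < k.+1)) ks ->
           ((num_indep a b ks n)%:R = P (sumn ks))%R).
Proof.
split.
  move=> a b a0 b0 _.
  exists (fun K => Frec (tab a b) K%:R (size (Linit m n)) (Linit m n) / n`!%:R)%R.
  exists (bd a b (size (Linit m n)) (Linit m n)).
  by move=> ks h1 h2 h3; apply: main_count.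
exists (fun K => Frec (fun c : cstr m n => c.1.2 == c.2.2) K%:R (size (Linit m n)) (Linit m n)
                 / n`!%:R)%R.
move=> a b a0 b0 _ Hind.
exists (bd a b (size (Linit m n)) (Linit m n)).
move=> ks h1 h2 h3; rewrite main_count //.
congr (_ / _)%R; apply: Frec_ext; first exact: all_bal_Linit.
by move=> c Hc; apply: tab_indep.
Qed.
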